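(* For every countable ordinal $\beta\ge1$ and every finite $m\ge1$, $\mathsf{rk}(\mathbb Z\cdot\omega^\beta\cdot m)=\omega\cdot(1+\beta)+\lfloor\log_2 m\rfloor$, where $1+\beta$ denotes ordinal addition with $1$ on the left.
   Context: For an ordinal $\alpha$, $\mathbb Z\cdot\alpha$ denotes the linear order consisting of $\alpha$ consecutive copies of $(\mathbb Z,<)$: the lexicographic order on $\alpha\times\mathbb Z$ comparing first the $\alpha$-coordinate. Let $\mathcal F$ be the class of finite linear orders (language $\{<\}$); countable linear orders are the structures considered; substructures are suborders and $\mathsf{age}(X)$ is the set of finite suborders of $X$. For $A\le B$, $B$ is a prime extension of $A$ if $|B\setminus A|=1$; a realization of $B$ in $X$ (where $A\le X$) is $C\le X$ with $A\le C$ and an order-isomorphism $B\to C$ fixing $A$ pointwise. For $F\in\mathsf{age}(X)$ define by recursion: $\mathsf{rk}_X(F)\ge0$ always; $\mathsf{rk}_X(F)\ge\gamma+1$ iff every prime extension $B\in\mathcal F$ of $F$ has a realization $C$ in $X$ with $\mathsf{rk}_X(C)\ge\gamma$; for limit $\gamma$, $\mathsf{rk}_X(F)\ge\gamma$ iff $\mathsf{rk}_X(F)\ge\delta$ for all $\delta<\gamma$. $\mathsf{rk}_X(F)=\sup\{\gamma:\mathsf{rk}_X(F)\ge\gamma\}$ (or $\infty$ if this holds for all ordinals), and $\mathsf{rk}(X)=\mathsf{rk}_X(\emptyset)$. *)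

(* Defs.v *)
From Stdlib Require Import List Arith ZArith.
Import ListNotations.

Set Implicit Arguments.

Definition is_strict_linorder {A : Type} (lt : A -> A -> Prop) : Prop :=
  (forall x, ~ lt x x) /\
  (forall x y z, lt x y -> lt y z -> lt x z) /\
  (forall x y, lt x y \/ x = y \/ lt y x).

Definition finite_set {A : Type} (S : A -> Prop) : Prop :=
  exists l : list A, forall x, S x <-> In x l.

Definition finite_type (A : Type) : Prop :=
  exists l : list A, forall x, In x l.

Definition order_embedding {A B : Type} (ltA : A -> A -> Prop)
  (ltB : B -> B -> Prop) (f : A -> B) : Prop :=
  (forall x y, f x = f y -> x = y) /\ (forall x y, ltA x y <-> ltB (f x) (f y)).

Definition sub_lt {A : Type} (ltX : A -> A -> Prop) (F : A -> Prop)
  (x y : {a : A | F a}) : Prop := ltX (proj1_sig x) (proj1_sig y).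

Section Rank.
Variables (A : Type) (ltX : A -> A -> Prop).

(* (B, ltB) together with the embedding j of the suborder F is a prime
   extension of F inside the class of finite linear orders:
   F <= B and |B \ F| = 1 *)
Definition prime_extension (F : A -> Prop) (B : Type) (ltB : B -> B -> Prop)
  (j : {a : A | F a} -> B) : Prop :=
  is_strict_linorder ltB /\ finite_type B /\
  order_embedding (sub_lt ltX F) ltB j /\
  exists b : B, (forall a, j a <> b) /\ (forall y, y = b \/ exists a, j a = y).

(* C <= X is a realization of the prime extension (B, j) of F in X:
   F <= C and h : B -> C is an order isomorphism fixing F pointwise *)
Definition realization (F : A -> Prop) (B : Type) (ltB : B -> B -> Prop)
  (j : {a : A | F a} -> B) (C : A -> Prop) (h : B -> A) : Prop :=
  (forall x, F x -> C x) /\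
  order_embedding ltB ltX h /\
  (forall y, C (h y)) /\ (forall x, C x -> exists y, h y = x) /\
  (forall a, h (j a) = proj1_sig a).

(* ordinals are represented as elements w of a well-order (W, ltW); the
   element w stands for the order type of its initial segment {v | v < w}. *)
Definition immediate_pred {W : Type} (ltW : W -> W -> Prop) (v w : W) : Prop :=
  ltW v w /\ ~ (exists u, ltW v u /\ ltW u w).

Definition is_limit {W : Type} (ltW : W -> W -> Prop) (w : W) : Prop :=
  (exists v, ltW v w) /\ ~ (exists v, immediate_pred ltW v w).

(* rk_ge ltW w F  <->  rk_X(F) >= (order type below w), by the recursion of
   the paper: the zero case is trivial, the successor case asks every prime
   extension to be realized by some C of rank >= predecessor, the limit case
   asks rank >= every smaller ordinal. *)
Inductive rk_ge {W : Type} (ltW : W -> W -> Prop) : W -> (A -> Prop) -> Prop :=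
| rk_ge_intro (w : W) (F : A -> Prop) :
    (forall v, immediate_pred ltW v w ->
       forall (B : Type) (ltB : B -> B -> Prop) (j : {a : A | F a} -> B),
         prime_extension F ltB j ->
         exists (C : A -> Prop) (h : B -> A),
           realization F ltB j C h /\ rk_ge ltW v C) ->
    (is_limit ltW w -> forall v, ltW v w -> rk_ge ltW v F) ->
    rk_ge ltW w F.

(* rk_X(F) equals the ordinal represented by w: rank >= w, and not >= any
   larger ordinal represented in W (W extends beyond w in our use). *)
Definition rank_is {W : Type} (ltW : W -> W -> Prop) (w : W) (F : A -> Prop)
  : Prop :=
  rk_ge ltW w F /\ (forall w', ltW w w' -> ~ rk_ge ltW w' F).

End Rank.

Section Concrete.
Variables (T : Type) (ltT : T -> T -> Prop).
(* (T, ltT) is a well-order representing the countable ordinal beta *)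

(* omega^beta : finitely supported maps beta -> omega, compared at the
   largest point of difference *)
Definition fin_supp (f : T -> nat) : Prop :=
  exists l : list T, forall t, f t <> 0 -> In t l.

Definition oexp : Type := {f : T -> nat | fin_supp f}.

Definition oexp_lt (f g : oexp) : Prop :=
  exists t, proj1_sig f t < proj1_sig g t /\
    (forall s, ltT t s -> proj1_sig f s = proj1_sig g s).

(* Z . omega^beta . m : the lexicographic order on m x omega^beta x Z,
   most significant coordinate first (omega^beta . m = m copies of
   omega^beta; Z . alpha = alpha copies of Z). *)
Definition Zom_car (m : nat) : Type := ({i : nat | i < m} * oexp * Z)%type.

Definition Zom_lt (m : nat) (x y : Zom_car m) : Prop :=
  match x, y with
  | (i, f, z), (i', f', z') =>
      proj1_sig i < proj1_sig i' \/
      (proj1_sig i = proj1_sig i' /\ (oexp_lt f f' \/ (f = f' /\ (z < z')%Z)))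
  end.

(* the well-order omega.(1+beta) + omega: lexicographic order on
   (1+beta) x omega (first coordinate most significant; None is the
   new least element of 1+beta), followed by a copy of omega.
   The element inr k represents the ordinal omega.(1+beta) + k. *)
Definition onePlus_lt (a b : option T) : Prop :=
  match a, b with
  | None, Some _ => True
  | Some s, Some t => ltT s t
  | _, _ => False
  end.

Definition tgt_car : Type := ((option T * nat) + nat)%type.

Definition tgt_lt (x y : tgt_car) : Prop :=
  match x, y with
  | inl (a, n), inl (b, n') => onePlus_lt a b \/ (a = b /\ n < n')
  | inl _, inr _ => True
  | inr _, inl _ => False
  | inr k, inr k' => k < k'
  end.

End Concrete.

(* Main.v *)
Require Import Defs.
From Stdlib Require Import List Arith ZArith Lia Classical ClassicalEpsilon FunctionalExtensionality ProofIrrelevance.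
Import ListNotations.
Set Implicit Arguments.
Unset Strict Implicit.

Lemma list_max {U : Type} (lt : U -> U -> Prop)
  (trans : forall a b c, lt a b -> lt b c -> lt a c)
  (tri : forall a b, a = b \/ lt a b \/ lt b a)
  (Pr : U -> Prop) (l : list U) :
  (exists u, In u l /\ Pr u) ->
  exists mx, In mx l /\ Pr mx /\ forall u, In u l -> Pr u -> u = mx \/ lt u mx.
Proof.
  induction l as [|a l IH]; intros [u [Hu Pu]]; [destruct Hu|].
  destruct (classic (exists u, In u l /\ Pr u)) as [Hex|Hno].
  - destruct (IH Hex) as [mx [Hm1 [Hm2 Hm3]]].
    destruct (classic (Pr a)) as [Pa|nPa].
    + destruct (tri a mx) as [E|[A|A]].
      * subst. exists mx. split; [left; auto|split; auto].
        intros w [<-|Hw] Pw; auto.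
      * exists mx. split; [right; auto|split; auto].
        intros w [<-|Hw] Pw; auto.
      * exists a. split; [left; auto|split; auto].
        intros w [<-|Hw] Pw; auto.
        destruct (Hm3 w Hw Pw) as [->|B]; right; eauto.
    + exists mx. split; [right; auto|split; auto].
      intros w [<-|Hw] Pw; [contradiction|auto].
  - exists a. destruct Hu as [<-|Hu]; [|exfalso; eauto].
    split; [left; auto|split; auto].
    intros w [<-|Hw] Pw; auto. exfalso; eauto.
Qed.

Section Ord.
Variables (T : Type) (ltT : T -> T -> Prop).
Hypothesis Hlin : is_strict_linorder ltT.

Definition Lbl : Type := (option T + unit)%type.
Definition Top : Lbl := inr tt.
Definition Bot : Lbl := inl None.
Definition Mid (t : T) : Lbl := inl (Some t).

Definition lbl_lt (c d : Lbl) : Prop :=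
  match c, d with
  | inl a, inl b => onePlus_lt ltT a b
  | inl _, inr _ => True
  | _, _ => False
  end.

Definition mk (c : Lbl) (n : nat) : tgt_car T :=
  match c with inl a => inl (a, n) | inr _ => inr n end.

Lemma T_irr : forall x, ~ ltT x x.
Proof. destruct Hlin as [H _]; exact H. Qed.
Lemma T_trans : forall x y z, ltT x y -> ltT y z -> ltT x z.
Proof. destruct Hlin as [_ [H _]]; exact H. Qed.
Lemma T_tri : forall x y, ltT x y \/ x = y \/ ltT y x.
Proof. destruct Hlin as [_ [_ H]]; exact H. Qed.

Lemma lbl_irr : forall c, ~ lbl_lt c c.
Proof. intros [[a|]|[]]; simpl; auto. apply T_irr. Qed.

Lemma lbl_trans : forall c d e, lbl_lt c d -> lbl_lt d e -> lbl_lt c e.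
Proof.
  intros [[a|]|[]] [[b|]|[]] [[x|]|[]]; simpl; auto; try tauto. apply T_trans.
Qed.

Lemma lbl_tri : forall c d, c = d \/ lbl_lt c d \/ lbl_lt d c.
Proof.
  intros [[a|]|[]] [[b|]|[]]; simpl; auto.
  destruct (T_tri a b) as [H|[H|H]]; subst; auto.
Qed.

Lemma lbl_asym : forall c d, lbl_lt c d -> ~ lbl_lt d c.
Proof. intros c d H1 H2. apply (lbl_irr (c:=c)). eapply lbl_trans; eauto. Qed.

Lemma mk_lt : forall c n c' n',
  tgt_lt ltT (mk c n) (mk c' n') <-> lbl_lt c c' \/ (c = c' /\ n < n').
Proof.
  intros [a|[]] n [b|[]] n'; simpl; split; intros H.
  - destruct H as [H|[H1 H2]]; auto. subst; auto.
  - destruct H as [H|[H1 H2]]; auto. injection H1; intros; subst; auto.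
  - left; auto.
  - auto.
  - destruct H.
  - destruct H as [[]|[H _]]. discriminate.
  - right; split; auto.
  - destruct H as [[]|[_ H]]; auto.
Qed.

Lemma tgt_surj : forall x, exists c n, x = mk c n.
Proof.
  intros [[a n]|n]. exists (inl a), n; reflexivity. exists Top, n; reflexivity.
Qed.

Definition tle (x y : tgt_car T) : Prop := tgt_lt ltT x y \/ x = y.

Lemma tgt_irr : forall x, ~ tgt_lt ltT x x.
Proof.
  intros x. destruct (tgt_surj x) as [c [n ->]]. rewrite mk_lt.
  intros [H|[_ H]]. apply (lbl_irr H). lia.
Qed.

Lemma tgt_trans : forall x y z, tgt_lt ltT x y -> tgt_lt ltT y z -> tgt_lt ltT x z.
Proof.
  intros x y z. destruct (tgt_surj x) as [c [n ->]].
  destruct (tgt_surj y) as [c' [n' ->]]. destruct (tgt_surj z) as [c'' [n'' ->]].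
  rewrite !mk_lt. intros [H|[-> H]] [H'|[-> H']]; auto.
  left; eapply lbl_trans; eauto. right; split; auto; lia.
Qed.

Lemma tgt_tri : forall x y, x = y \/ tgt_lt ltT x y \/ tgt_lt ltT y x.
Proof.
  intros x y. destruct (tgt_surj x) as [c [n ->]].
  destruct (tgt_surj y) as [c' [n' ->]]. rewrite !mk_lt.
  destruct (lbl_tri c c') as [->|[H|H]]; auto.
  destruct (lt_eq_lt_dec n n') as [[H|H]|H]; [auto|subst; auto|auto].
Qed.

Lemma tle_trans : forall x y z, tle x y -> tle y z -> tle x z.
Proof.
  intros x y z [H| ->] [H'| ->]; unfold tle; auto. left; eapply tgt_trans; eauto.
Qed.

Lemma lt_tle_lt : forall x y z, tgt_lt ltT x y -> tle y z -> tgt_lt ltT x z.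
Proof. intros x y z H [H'| ->]; auto. eapply tgt_trans; eauto. Qed.

Lemma tle_lt_lt : forall x y z, tle x y -> tgt_lt ltT y z -> tgt_lt ltT x z.
Proof. intros x y z [H| ->] H'; auto. eapply tgt_trans; eauto. Qed.

Lemma mk_le_n : forall c n n', n <= n' -> tle (mk c n) (mk c n').
Proof.
  intros c n n' H. destruct (Nat.eq_dec n n') as [->|N]. right; auto.
  left. apply mk_lt. right; split; auto; lia.
Qed.

Lemma mk_lbl_lt : forall c c' n n', lbl_lt c c' -> tgt_lt ltT (mk c n) (mk c' n').
Proof. intros. apply mk_lt; auto. Qed.

Lemma lt_mk_S : forall v c j, tgt_lt ltT v (mk c (S j)) -> tle v (mk c j).
Proof.
  intros v c j H. destruct (tgt_surj v) as [c' [n ->]].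
  apply mk_lt in H. destruct H as [H|[-> H]].
  left; apply mk_lt; auto. apply mk_le_n; lia.
Qed.

Lemma lt_mk_0 : forall v c, tgt_lt ltT v (mk c 0) -> exists c' n, v = mk c' n /\ lbl_lt c' c.
Proof.
  intros v c H. destruct (tgt_surj v) as [c' [n ->]].
  apply mk_lt in H. destruct H as [H|[-> H]]. eauto. lia.
Qed.

Hypothesis Hwf : well_founded ltT.

Lemma onePlus_wf : well_founded (onePlus_lt ltT).
Proof.
  assert (A0 : Acc (onePlus_lt ltT) None).
  { constructor. intros [y|] H; destruct H. }
  intros [t|]; auto.
  induction (Hwf t) as [t _ IH].
  constructor. intros [y|] H; simpl in H; auto.
Qed.

Lemma tgt_wf : well_founded (tgt_lt ltT).
Proof.
  assert (Hl : forall a n, Acc (tgt_lt ltT) (inl (a, n))).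
  { intros a. induction (onePlus_wf a) as [a _ IHa].
    intros n. induction (lt_wf n) as [n _ IHn].
    constructor. intros [[b k]|k] H; simpl in H; [|destruct H].
    destruct H as [H|[-> H]]; auto. }
  intros [[a n]|n]; auto.
  induction (lt_wf n) as [n _ IHn].
  constructor. intros [[b k]|k] H; simpl in H; auto.
Qed.


Definition Pt : Type := Lbl -> Z.

Definition topd (P Q : Pt) (c : Lbl) : Prop :=
  (P c < Q c)%Z /\ forall d, lbl_lt c d -> P d = Q d.
Definition elt (P Q : Pt) : Prop := exists c, topd P Q c.
Definition value (P Q : Pt) (c : Lbl) : tgt_car T :=
  mk c (Nat.log2 (Z.to_nat (Q c - P c))).

Lemma topd_uniq : forall P Q c1 c2, topd P Q c1 -> topd P Q c2 -> c1 = c2.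
Proof.
  intros P Q c1 c2 [A1 B1] [A2 B2].
  destruct (lbl_tri c1 c2) as [E|[H|H]]; auto.
  - rewrite (B1 _ H) in A2. lia.
  - rewrite (B2 _ H) in A1. lia.
Qed.

Lemma elt_irr : forall P, ~ elt P P.
Proof. intros P [c [H _]]. lia. Qed.

Lemma topd_trans : forall P Q R c1 c2, topd P Q c1 -> topd Q R c2 ->
  exists c, topd P R c /\ (c = c1 \/ c = c2).
Proof.
  intros P Q R c1 c2 [A1 B1] [A2 B2].
  destruct (lbl_tri c1 c2) as [E|[H|H]].
  - subst. exists c2. split; auto. split. lia.
    intros d Hd. rewrite B1, B2; auto.
  - exists c2. split; auto. split. rewrite B1; auto.
    intros d Hd. rewrite B1, B2; auto. eapply lbl_trans; eauto.
  - exists c1. split; auto. split. rewrite <- B2; auto.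
    intros d Hd. rewrite B1, B2; auto. eapply lbl_trans; eauto.
Qed.

Lemma elt_trans : forall P Q R, elt P Q -> elt Q R -> elt P R.
Proof.
  intros P Q R [c1 H1] [c2 H2]. destruct (topd_trans H1 H2) as [c [H _]].
  exists c; auto.
Qed.

Definition lble (c d : Lbl) : Prop := c = d \/ lbl_lt c d.

Lemma between : forall P Q R c c1 c2, topd P Q c -> topd P R c1 -> topd R Q c2 ->
  lble c1 c /\ lble c2 c.
Proof.
  intros P Q R c c1 c2 [A B] [A1 B1] [A2 B2]. unfold lble.
  split.
  - destruct (lbl_tri c1 c) as [E|[H|H]]; auto. exfalso.
    destruct (lbl_tri c2 c1) as [E|[H'|H']].
    + subst c2. rewrite (B c1 H) in A1. lia.
    + rewrite (B2 c1 H') in A1. rewrite (B c1 H) in A1. lia.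
    + rewrite <- (B1 c2 H') in A2. rewrite (B c2 (lbl_trans H H')) in A2. lia.
  - destruct (lbl_tri c2 c) as [E|[H|H]]; auto. exfalso.
    destruct (lbl_tri c1 c2) as [E|[H'|H']].
    + subst c1. rewrite (B c2 H) in A1. lia.
    + rewrite <- (B1 c2 H') in A2. rewrite (B c2 H) in A2. lia.
    + rewrite (B2 c1 H') in A1. rewrite (B c1 (lbl_trans H H')) in A1. lia.
Qed.

Lemma log2_split : forall a b, 1 <= a -> 1 <= b ->
  Nat.log2 a < Nat.log2 (a + b) \/ Nat.log2 b < Nat.log2 (a + b).
Proof.
  intros a b Ha Hb.
  assert (K : forall x y, 1 <= x -> x <= y -> Nat.log2 x < Nat.log2 (x + y)).
  { intros x y Hx Hxy.
    assert (Nat.log2 (2 * x) <= Nat.log2 (x + y)) by (apply Nat.log2_le_mono; lia).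
    rewrite Nat.log2_double in H by lia. lia. }
  destruct (Nat.le_ge_cases a b) as [H|H]. left; apply K; lia.
  right. rewrite Nat.add_comm. apply K; lia.
Qed.

Lemma split_down : forall P Q R c c1 c2, topd P Q c -> topd P R c1 -> topd R Q c2 ->
  tgt_lt ltT (value P R c1) (value P Q c) \/ tgt_lt ltT (value R Q c2) (value P Q c).
Proof.
  intros P Q R c c1 c2 H H1 H2.
  destruct (between H H1 H2) as [E1 E2]. unfold value.
  destruct E1 as [E1|E1]; [|left; apply mk_lbl_lt; auto].
  destruct E2 as [E2|E2]; [|right; apply mk_lbl_lt; auto].
  subst c1 c2. destruct H1 as [A1 _]. destruct H2 as [A2 _].
  assert (E : Z.to_nat (Q c - P c) = Z.to_nat (R c - P c) + Z.to_nat (Q c - R c)) by lia.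
  rewrite E. destruct (@log2_split (Z.to_nat (R c - P c)) (Z.to_nat (Q c - R c))) as [L|L]; try lia.
  - left. apply mk_lt. right; auto.
  - right. apply mk_lt. right; auto.
Qed.

Lemma mono_aux : forall P' P Q' c', topd P' Q' c' -> (P' = P \/ elt P' P) -> elt P Q' ->
  (forall d, lbl_lt c' d -> P d = P' d) /\ (P' c' <= P c')%Z.
Proof.
  intros P' P Q' c' H [<-|[c3 H3]] [c4 H4]. split; auto; lia.
  destruct (between H H3 H4) as [E3 _].
  split.
  - intros d Hd. symmetry. apply H3. destruct E3 as [->|E3]; auto. eapply lbl_trans; eauto.
  - destruct E3 as [->|E3]. destruct H3; lia. rewrite (proj2 H3 _ E3). lia.
Qed.

Lemma mono_aux2 : forall P' Q Q' c', topd P' Q' c' -> (Q = Q' \/ elt Q Q') -> elt P' Q ->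
  (forall d, lbl_lt c' d -> Q d = Q' d) /\ (Q c' <= Q' c')%Z.
Proof.
  intros P' Q Q' c' H [<-|[c3 H3]] [c4 H4]. split; auto; lia.
  destruct (between H H4 H3) as [_ E3].
  split.
  - intros d Hd. apply H3. destruct E3 as [->|E3]; auto. eapply lbl_trans; eauto.
  - destruct E3 as [->|E3]. destruct H3; lia. rewrite (proj2 H3 _ E3). lia.
Qed.

Lemma mono : forall P P' Q Q' c c', (P' = P \/ elt P' P) -> (Q = Q' \/ elt Q Q') ->
  topd P Q c -> topd P' Q' c' -> tle (value P Q c) (value P' Q' c').
Proof.
  intros P P' Q Q' c c' HP HQ H H'.
  assert (PQ : elt P Q) by (exists c; auto).
  assert (PQ' : elt P Q') by (destruct HQ as [<-|HQ]; auto; eapply elt_trans; eauto).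
  assert (P'Q : elt P' Q) by (destruct HP as [<-|HP]; auto; eapply elt_trans; eauto).
  destruct (mono_aux H' HP PQ') as [A1 A2].
  destruct (mono_aux2 H' HQ P'Q) as [B1 B2].
  unfold value.
  destruct (lbl_tri c c') as [E|[L|L]].
  - subst c'. apply mk_le_n. apply Nat.log2_le_mono. destruct H; lia.
  - left. apply mk_lbl_lt; auto.
  - exfalso. destruct H as [X _]. rewrite A1, B1 in X; auto.
    destruct H' as [_ Y]. rewrite (Y c L) in X. lia.
Qed.

Lemma elt_total : forall (P Q : Pt) (l : list Lbl), (forall c, P c <> Q c -> In c l) ->
  (forall c, P c = Q c) \/ elt P Q \/ elt Q P.
Proof.
  intros P Q l Hl.
  destruct (classic (exists c, P c <> Q c)) as [[c Hc]|Hno].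
  2:{ left. intros c. destruct (Z.eq_dec (P c) (Q c)); auto. exfalso; eauto. }
  destruct (@list_max _ lbl_lt lbl_trans (fun a b => match lbl_tri a b with
     | or_introl E => or_introl E | or_intror X => or_intror X end)
     (fun c => P c <> Q c) l) as [mx [_ [Hm1 Hm2]]].
  { exists c; auto. }
  right.
  assert (Ab : forall d, lbl_lt mx d -> P d = Q d).
  { intros d Hd. destruct (Z.eq_dec (P d) (Q d)) as [E|N]; auto.
    destruct (Hm2 d (Hl d N) N) as [->|X]. destruct (lbl_irr Hd).
    destruct (lbl_asym Hd X). }
  destruct (Z_lt_le_dec (P mx) (Q mx)).
  - left. exists mx. split; auto.
  - right. exists mx. split. lia. intros d Hd; symmetry; auto.
Qed.

Variables (m : nat) (t0 : T).
Hypothesis Hm : 1 <= m.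
Hypothesis Ht0 : forall t, ~ ltT t t0.

Definition ez (x : Zom_car T m) : Pt := fun c =>
  match c with
  | inr _ => Z.of_nat (proj1_sig (fst (fst x)))
  | inl None => snd x
  | inl (Some t) => Z.of_nat (proj1_sig (snd (fst x)) t)
  end.

Definition Lpt : Pt := fun c =>
  match c with
  | inl (Some t) => if excluded_middle_informative (t = t0) then (-1)%Z else 0%Z
  | _ => 0%Z
  end.

Definition Rpt : Pt := fun c =>
  match c with inr _ => Z.of_nat m | _ => 0%Z end.

Definition realish (r : Pt) : Prop :=
  (0 <= r Top)%Z /\ (r Top < Z.of_nat m)%Z /\ (forall t, (0 <= r (Mid t))%Z) /\
  exists l, forall t, r (Mid t) <> 0%Z -> In t l.

Definition lish (P : Pt) : Prop := P = Lpt \/ realish P.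
Definition rish (Q : Pt) : Prop := Q = Rpt \/ realish Q.

Lemma Lpt_t0 : Lpt (Mid t0) = (-1)%Z.
Proof. simpl. destruct (excluded_middle_informative (t0 = t0)); congruence. Qed.

Lemma Lpt_ne : forall t, t <> t0 -> Lpt (Mid t) = 0%Z.
Proof. intros t H. simpl. destruct (excluded_middle_informative (t = t0)); congruence. Qed.

Lemma pow2_pos : forall j, 1 <= 2 ^ j.
Proof. induction j; simpl; lia. Qed.

Lemma top_max : forall c, ~ lbl_lt Top c.
Proof. intros [a|[]]; simpl; auto. Qed.

Lemma inr_top : forall u : unit, (inr u : Lbl) = Top.
Proof. intros []; reflexivity. Qed.

Lemma below_t0 : forall c, lbl_lt c (Mid t0) -> c = Bot.
Proof.
  intros [[s|]|u] H; simpl in H; auto. destruct (Ht0 H). destruct H.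
Qed.

Lemma above_t0 : forall c, c <> Bot -> c <> Mid t0 -> lbl_lt (Mid t0) c.
Proof.
  intros [[s|]|u] H1 H2; simpl.
  - destruct (T_tri s t0) as [X|[X|X]]; auto.
    + destruct (Ht0 X).
    + subst. destruct (H2 eq_refl).
  - destruct (H1 eq_refl).
  - auto.
Qed.

Lemma lish_Top : forall P, lish P -> (0 <= P Top)%Z /\ (P Top < Z.of_nat m)%Z.
Proof. intros P [->|[A [B _]]]; simpl; auto. lia. Qed.

Lemma lish_Mid : forall P t, lish P -> (-1 <= P (Mid t))%Z.
Proof.
  intros P t [->|[_ [_ [C _]]]]. simpl. destruct (excluded_middle_informative (t = t0)); lia.
  specialize (C t); lia.
Qed.

Lemma lish_supp : forall P, lish P -> exists l, forall t, P (Mid t) <> 0%Z -> In t l.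
Proof.
  intros P [->|[_ [_ [_ D]]]]; auto. exists [t0]. intros t H.
  destruct (excluded_middle_informative (t = t0)). subst; left; auto.
  rewrite Lpt_ne in H; auto. destruct (H eq_refl).
Qed.

Lemma rish_Top : forall Q, rish Q -> (Q Top <= Z.of_nat m)%Z.
Proof. intros Q [->|[A [B _]]]; simpl; lia. Qed.

Lemma rish_Mid : forall Q t, rish Q -> (0 <= Q (Mid t))%Z.
Proof. intros Q t [->|[_ [_ [C _]]]]; simpl; auto. lia. Qed.

Lemma above_nonneg : forall P Q c, lish P -> rish Q -> topd P Q c ->
  forall t, lbl_lt c (Mid t) -> (0 <= P (Mid t))%Z.
Proof.
  intros P Q c HP HQ [A B] t Ht.
  destruct HP as [->|[_ [_ [C _]]]]; auto.
  destruct (excluded_middle_informative (t = t0)) as [->|N].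
  - exfalso. pose proof (B _ Ht) as E. rewrite Lpt_t0 in E.
    pose proof (rish_Mid (t:=t0) HQ). lia.
  - rewrite Lpt_ne; auto. lia.
Qed.

Definition graft (P : Pt) (c : Lbl) (a : Z) : Pt := fun d =>
  if excluded_middle_informative (lbl_lt c d) then P d
  else if excluded_middle_informative (d = c) then a else 0%Z.

Lemma graft_above : forall P c a d, lbl_lt c d -> graft P c a d = P d.
Proof. intros. unfold graft. destruct (excluded_middle_informative (lbl_lt c d)); tauto. Qed.

Lemma graft_at : forall P c a, graft P c a c = a.
Proof.
  intros. unfold graft. destruct (excluded_middle_informative (lbl_lt c c)) as [X|_].
  destruct (lbl_irr X). destruct (excluded_middle_informative (c = c)); congruence.
Qed.

Lemma graft_realish : forall P c a,
  (c = Top -> (0 <= a)%Z /\ (a < Z.of_nat m)%Z) ->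
  (c <> Top -> (0 <= P Top)%Z /\ (P Top < Z.of_nat m)%Z) ->
  (forall t, lbl_lt c (Mid t) -> (0 <= P (Mid t))%Z) ->
  (forall t, c = Mid t -> (0 <= a)%Z) ->
  (exists l, forall t, P (Mid t) <> 0%Z -> In t l) ->
  realish (graft P c a).
Proof.
  intros P c a H1 H2 H3 H4 [l Hl].
  assert (GT : (0 <= graft P c a Top)%Z /\ (graft P c a Top < Z.of_nat m)%Z).
  { destruct (excluded_middle_informative (c = Top)) as [->|N].
    rewrite graft_at; auto.
    rewrite graft_above; auto. destruct c as [x|[]]; simpl; auto. }
  split; [tauto|split; [tauto|split]].
  - intros t. unfold graft.
    destruct (excluded_middle_informative (lbl_lt c (Mid t))); auto.
    destruct (excluded_middle_informative (Mid t = c)); [eauto|lia].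
  - exists (match c with inl (Some s) => s :: l | _ => l end).
    intros t Ht. unfold graft in Ht.
    destruct (excluded_middle_informative (lbl_lt c (Mid t))).
    + apply Hl in Ht. destruct c as [[s|]|u]; simpl; auto.
    + destruct (excluded_middle_informative (Mid t = c)) as [E|]; [|lia].
      subst c. left; auto.
Qed.

Lemma topd_graft : forall P c a, (P c < a)%Z -> topd P (graft P c a) c.
Proof.
  intros. split. rewrite graft_at; auto.
  intros d Hd. rewrite graft_above; auto.
Qed.

Lemma value_pow : forall P c j, value P (graft P c (P c + Z.of_nat (2 ^ j))) c = mk c j.
Proof.
  intros. unfold value. rewrite graft_at.
  replace (Z.to_nat (P c + Z.of_nat (2 ^ j) - P c)) with (2 ^ j) by lia.
  rewrite Nat.log2_pow2; auto. lia.
Qed.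

Lemma B1 : forall P Q c c' n, lish P -> rish Q -> topd P Q c -> lbl_lt c' c ->
  (c' <> Bot \/ P <> Lpt) ->
  exists r, realish r /\ topd P r c' /\ topd r Q c /\ value P r c' = mk c' n /\
    value r Q c = value P Q c.
Proof.
  intros P Q c c' n HP HQ H Hc' Hd.
  set (r := graft P c' (P c' + Z.of_nat (2 ^ n))).
  assert (Hp := pow2_pos n).
  assert (Rc : r c = P c) by (apply graft_above; auto).
  exists r. split; [|split; [|split; [|split]]].
  - apply graft_realish.
    + intros ->. destruct (top_max Hc').
    + intros _. apply lish_Top; auto.
    + intros t Ht. destruct HP as [->|[_ [_ [C _]]]]; auto.
      destruct (excluded_middle_informative (t = t0)) as [->|N].
      * apply below_t0 in Ht. destruct Hd; congruence.
      * rewrite Lpt_ne; auto. lia.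
    + intros t ->. pose proof (lish_Mid (t:=t) HP). lia.
    + apply lish_supp; auto.
  - apply topd_graft. lia.
  - destruct H as [A B]. split. rewrite Rc; auto.
    intros d Hd0. unfold r. rewrite graft_above. auto. eapply lbl_trans; eauto.
  - apply value_pow.
  - unfold value. rewrite Rc. auto.
Qed.

Lemma lower_split : forall P Q c v, lish P -> rish Q -> topd P Q c ->
  tgt_lt ltT v (value P Q c) ->
  exists r c1 c2, realish r /\ topd P r c1 /\ topd r Q c2 /\
    tle v (value P r c1) /\ tle v (value r Q c2).
Proof.
  intros P Q c v HP HQ H Hv.
  set (D := Z.to_nat (Q c - P c)).
  assert (HD : 0 < D) by (destruct H; unfold D; lia).
  destruct (Nat.log2_spec D HD) as [S1 S2].
  unfold value in Hv. fold D in Hv.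
  destruct (Nat.log2 D) as [|j] eqn:Ek.
  -
    destruct (lt_mk_0 Hv) as [c' [n [-> Hc']]].
    assert (Hgt : forall x, tle (mk c' n) (mk c x)) by (intros; left; apply mk_lbl_lt; auto).
    destruct (classic (c' = Bot /\ P = Lpt)) as [[E1 E2]|NE].
    + subst c' P.
      destruct (excluded_middle_informative (c = Mid t0)) as [->|Nc].
      *
        assert (RQ : realish Q).
        { destruct HQ as [->|X]; auto. exfalso. destruct H as [_ B].
          pose proof (B Top (I : lbl_lt (Mid t0) Top)). simpl in H. lia. }
        set (r := graft Q Bot (Q Bot - Z.of_nat (2 ^ n))).
        assert (Hp := pow2_pos n).
        assert (Ra : forall d, lbl_lt Bot d -> r d = Q d) by (intros; apply graft_above; auto).
        exists r, (Mid t0), Bot. split; [|split; [|split; [|split]]].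
        -- destruct RQ as [A1 [A2 [A3 A4]]]. apply graft_realish; auto.
           ++ intros E; discriminate.
           ++ intros t E; discriminate.
        -- destruct H as [A B]. split. rewrite Ra; simpl; auto.
           intros d Hd. rewrite Ra; auto. eapply lbl_trans; [|eauto]. simpl; auto.
        -- split. unfold r; rewrite graft_at; lia. intros d Hd; auto.
        -- unfold value. rewrite Ra by (simpl; auto). apply Hgt.
        -- unfold value, r. rewrite graft_at.
           replace (Z.to_nat (Q Bot - (Q Bot - Z.of_nat (2 ^ n)))) with (2 ^ n) by lia.
           rewrite Nat.log2_pow2 by lia. right; auto.
      * assert (Hc0 : lbl_lt (Mid t0) c).
        { apply above_t0; auto. intros ->. destruct (lbl_irr Hc'). }
        assert (NB : Mid t0 <> Bot \/ Lpt <> Lpt) by (left; discriminate).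
        destruct (@B1 Lpt Q c (Mid t0) 0 (or_introl eq_refl) HQ H Hc0 NB)
          as [r [R1 [R2 [R3 [R4 R5]]]]].
        exists r, (Mid t0), c. split; [|split; [|split; [|split]]]; auto.
        -- rewrite R4. left. apply mk_lbl_lt. simpl; auto.
        -- rewrite R5. unfold value. apply Hgt.
    + assert (NB : c' <> Bot \/ P <> Lpt).
      { destruct (classic (c' = Bot)); [right|left]; auto; intros E; apply NE; auto. }
      destruct (@B1 P Q c c' n HP HQ H Hc' NB) as [r [R1 [R2 [R3 [R4 R5]]]]].
      exists r, c', c. split; [|split; [|split; [|split]]]; auto.
      -- rewrite R4. right; auto.
      -- rewrite R5. unfold value. apply Hgt.
  -
    set (p := 2 ^ j).
    assert (Hp : 2 * p <= D) by (unfold p; rewrite Nat.pow_succ_r' in S1; lia).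
    assert (Hp1 : 1 <= p) by apply pow2_pos.
    set (r := graft P c (P c + Z.of_nat p)).
    assert (Rc : r c = (P c + Z.of_nat p)%Z) by apply graft_at.
    assert (Rab : forall d, lbl_lt c d -> r d = P d) by (intros; apply graft_above; auto).
    assert (Vj : tle v (mk c j)) by (apply lt_mk_S; auto).
    exists r, c, c. split; [|split; [|split; [|split]]].
    + apply graft_realish.
      * intros ->. split. pose proof (lish_Top HP); lia.
        pose proof (rish_Top HQ). unfold D in Hp. lia.
      * intros _. apply lish_Top; auto.
      * intros t Ht. eapply above_nonneg; eauto.
      * intros t ->. pose proof (lish_Mid (t:=t) HP). lia.
      * apply lish_supp; auto.
    + apply topd_graft. lia.
    + destruct H as [A B]. split. rewrite Rc. unfold D in Hp. lia.
      intros d Hd. rewrite Rab; auto.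
    + unfold r, p. rewrite value_pow. auto.
    + eapply tle_trans; [exact Vj|]. unfold value. apply mk_le_n.
      rewrite Rc. replace j with (Nat.log2 p) at 1 by (unfold p; apply Nat.log2_pow2; lia).
      apply Nat.log2_le_mono. unfold D in Hp. lia.
Qed.

Definition ZL := @Zom_lt T ltT m.

Lemma ez_realish : forall x, realish (ez x).
Proof.
  intros [[i f] z]. unfold realish; simpl.
  destruct i as [i Hi]. destruct f as [f [l Hl]]. simpl.
  split; [lia|split; [lia|split; [intros; lia|]]].
  exists l. intros t Ht. apply Hl. lia.
Qed.

Lemma realish_ez : forall r, realish r -> exists x, ez x = r.
Proof.
  intros r [A1 [A2 [A3 [l A4]]]].
  assert (Hi : Z.to_nat (r Top) < m) by lia.
  assert (Hf : fin_supp (fun t => Z.to_nat (r (Mid t)))).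
  { exists l. intros t Ht. apply A4. specialize (A3 t). lia. }
  exists (exist _ (Z.to_nat (r Top)) Hi, exist _ _ Hf, r Bot).
  apply functional_extensionality. intros [[t|]|[]]; simpl.
  - specialize (A3 t). unfold Mid in *. lia.
  - reflexivity.
  - unfold Top in *. lia.
Qed.

Lemma oexp_eq : forall (f g : oexp T), (forall t, proj1_sig f t = proj1_sig g t) -> f = g.
Proof.
  intros [f Hf] [g Hg] E. simpl in E.
  assert (f = g) by (apply functional_extensionality; auto). subst g.
  f_equal. apply proof_irrelevance.
Qed.

Lemma ez_inj : forall x y, ez x = ez y -> x = y.
Proof.
  intros [[[i Hi] f] z] [[[i' Hi'] f'] z'] E.
  pose proof (f_equal (fun P => P Top) E) as ET. simpl in ET.
  pose proof (f_equal (fun P => P Bot) E) as EB. simpl in EB.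
  assert (i = i') by lia. subst i'.
  assert (Hi = Hi') by apply proof_irrelevance. subst Hi'. subst z'.
  f_equal. f_equal. apply oexp_eq. intros t.
  pose proof (f_equal (fun P => P (Mid t)) E) as EM. simpl in EM. lia.
Qed.

Lemma ez_lt : forall x y, ZL x y <-> elt (ez x) (ez y).
Proof.
  intros [[[i Hi] f] z] [[[i' Hi'] f'] z']. unfold ZL, Zom_lt. simpl. split.
  - intros [H|[E [[t [H1 H2]]|[E2 H]]]].
    + exists Top. split. simpl; lia. intros d Hd. destruct (top_max Hd).
    + exists (Mid t). split. simpl; lia.
      intros [[s|]|[]] Hd; simpl in *; try lia; try tauto. rewrite H2; auto.
    + subst f'. exists Bot. split. simpl; lia.
      intros [[s|]|[]] Hd; simpl in *; try lia; try tauto.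
  - intros [c [H1 H2]].
    destruct c as [[t|]|[]].
    + right. split. specialize (H2 Top I). simpl in H2. lia.
      left. exists t. split. simpl in H1. lia.
      intros s Hs. specialize (H2 (Mid s) Hs). simpl in H2. lia.
    + right. split. specialize (H2 Top I). simpl in H2. lia.
      right. split. apply oexp_eq. intros t.
      specialize (H2 (Mid t) I). simpl in H2. lia.
      simpl in H1. auto.
    + left. simpl in H1. lia.
Qed.

Lemma ez_total : forall x y, x = y \/ ZL x y \/ ZL y x.
Proof.
  intros x y.
  destruct (ez_realish x) as [_ [_ [_ [l1 L1]]]].
  destruct (ez_realish y) as [_ [_ [_ [l2 L2]]]].
  destruct (@elt_total (ez x) (ez y) ([Top; Bot] ++ map Mid (l1 ++ l2))) as [E|[E|E]].
  - intros [[t|]|[]] N.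
    + right. right. apply (in_map Mid). apply in_or_app.
      destruct (Z.eq_dec (ez x (Mid t)) 0) as [Z0|Z0].
      * right. apply L2. unfold Mid in *. lia.
      * left. apply L1. auto.
    + right; left; auto.
    + left; auto.
  - left. apply ez_inj. apply functional_extensionality; auto.
  - right; left. apply ez_lt; auto.
  - right; right. apply ez_lt; auto.
Qed.

Lemma ZL_irr : forall x, ~ ZL x x.
Proof. intros x H. apply ez_lt in H. apply (elt_irr H). Qed.

Lemma ZL_trans : forall x y z, ZL x y -> ZL y z -> ZL x z.
Proof. intros x y z H1 H2. apply ez_lt. apply ez_lt in H1, H2. eapply elt_trans; eauto. Qed.

Lemma ZL_lin : is_strict_linorder ZL.
Proof.
  split; [exact ZL_irr|split; [exact ZL_trans|]].
  intros x y. destruct (ez_total x y) as [E|[E|E]]; auto.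
Qed.

Lemma elt_L_real : forall r, realish r -> elt Lpt r.
Proof.
  intros r Hr. destruct Hr as [A1 [A2 [A3 [l A4]]]].
  destruct (@elt_total Lpt r ([Top; Bot; Mid t0] ++ map Mid l)) as [E|[E|E]]; auto.
  - intros [[t|]|[]] N.
    + destruct (excluded_middle_informative (t = t0)) as [->|Nt].
      * right; right; left; auto.
      * right; right; right. apply (in_map Mid). apply A4. change (inl (Some t) : Lbl) with (Mid t) in N. rewrite Lpt_ne in N; auto.
    + right; left; auto.
    + left; auto.
  - exfalso. specialize (E (Mid t0)). rewrite Lpt_t0 in E. specialize (A3 t0). unfold Mid in *. lia.
  - exfalso. destruct E as [[[t|]|[]] [H1 H2]].
    + specialize (A3 t). simpl in H1.
      unfold Mid in *. destruct (excluded_middle_informative (t = t0)); lia.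
    + specialize (H2 (Mid t0) I). rewrite Lpt_t0 in H2. specialize (A3 t0). unfold Mid in *. lia.
    + simpl in H1. unfold Top in A1. lia.
Qed.

Lemma topd_real_R : forall r, realish r -> topd r Rpt Top.
Proof.
  intros r [A1 [A2 _]]. split. simpl. auto. intros d Hd; destruct (top_max Hd).
Qed.

Lemma elt_real_R : forall r, realish r -> elt r Rpt.
Proof. intros r Hr. exists Top. apply topd_real_R; auto. Qed.

Lemma topd_LR : topd Lpt Rpt Top.
Proof. split. simpl. lia. intros d Hd; destruct (top_max Hd). Qed.

Lemma value_LR : value Lpt Rpt Top = inr (Nat.log2 m).
Proof. unfold value. simpl. rewrite Z.sub_0_r, Nat2Z.id. reflexivity. Qed.

Lemma lish_L : lish Lpt.
Proof. left; auto. Qed.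
Lemma rish_R : rish Rpt.
Proof. left; auto. Qed.

Lemma pick_max : forall (B : Type) (ltB : B -> B -> Prop), is_strict_linorder ltB ->
  forall (lB : list B), (forall y, In y lB) ->
  forall (J : Type) (j : J -> B) (b : B),
  (forall a, ~ ltB (j a) b) \/
  exists a, ltB (j a) b /\ forall a', ltB (j a') b -> j a' = j a \/ ltB (j a') (j a).
Proof.
  intros B ltB [Birr [Btr Btri]] lB HlB J j b.
  destruct (classic (exists y, In y lB /\ (ltB y b /\ exists a, j a = y))) as [Ex|No].
  - destruct (@list_max B ltB Btr
      (fun x y => match Btri x y with
        | or_introl H => or_intror (or_introl H)
        | or_intror (or_introl H) => or_introl H
        | or_intror (or_intror H) => or_intror (or_intror H) end)
      (fun y => ltB y b /\ exists a, j a = y) lB Ex) as [mx [_ [[M1 [a Ha]] M2]]].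
    right. exists a. subst mx. split; auto.
    intros a' Ha'. apply M2; eauto.
  - left. intros a Ha. apply No. exists (j a). split; eauto.
Qed.

Lemma flip_lin : forall (B : Type) (ltB : B -> B -> Prop), is_strict_linorder ltB ->
  is_strict_linorder (fun x y => ltB y x).
Proof.
  intros B ltB [A [C D]]. split; [auto|split]. intros x y z H1 H2; eauto.
  intros x y. destruct (D x y) as [H|[H|H]]; auto.
Qed.

Definition extL (F : Zom_car T m -> Prop) (P : Pt) : Prop :=
  P = Lpt \/ exists x, F x /\ P = ez x.
Definition extR (F : Zom_car T m -> Prop) (Q : Pt) : Prop :=
  Q = Rpt \/ exists x, F x /\ Q = ez x.
Definition Good (w : tgt_car T) (F : Zom_car T m -> Prop) : Prop :=
  forall P Q c, extL F P -> extR F Q -> topd P Q c -> tle w (value P Q c).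

Lemma extL_lish : forall F P, extL F P -> lish P.
Proof. intros F P [->|[x [_ ->]]]. left; auto. right; apply ez_realish. Qed.
Lemma extR_rish : forall F Q, extR F Q -> rish Q.
Proof. intros F Q [->|[x [_ ->]]]. left; auto. right; apply ez_realish. Qed.

Lemma emb_inj : forall (B : Type) (ltB : B -> B -> Prop) (h : B -> Zom_car T m),
  is_strict_linorder ltB -> (forall y y', ltB y y' <-> ZL (h y) (h y')) ->
  forall y y', h y = h y' -> y = y'.
Proof.
  intros B ltB h [_ [_ Btri]] Hiff y y' E.
  destruct (Btri y y') as [X|[X|X]]; auto; apply Hiff in X; rewrite E in X;
  destruct (ZL_irr X).
Qed.

Lemma lower : forall w F, Good w F -> rk_ge ZL (tgt_lt ltT) w F.
Proof.
  intros w. induction w as [w IH] using (well_founded_ind tgt_wf).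
  intros F HG. constructor.
  - intros v [Hvw _] B ltB j Hpe.
    destruct Hpe as [Blin [[lB HlB] [[jinj jiff] [b [Hb Hcov]]]]].
    pose proof Blin as [Birr [Btr Btri]].
    assert (HPx : exists P, (P = Lpt \/ exists a, ltB (j a) b /\ P = ez (proj1_sig a)) /\
       forall a, ltB (j a) b -> ez (proj1_sig a) = P \/ elt (ez (proj1_sig a)) P).
    { destruct (pick_max Blin HlB j b) as [No|[a [Ha M]]].
      - exists Lpt. split; auto. intros a Ha; destruct (No a Ha).
      - exists (ez (proj1_sig a)). split; eauto.
        intros a' Ha'. destruct (M a' Ha') as [E|E].
        + apply jinj in E. subst; auto.
        + right. apply ez_lt. apply jiff. auto. }
    assert (HQx : exists Q, (Q = Rpt \/ exists a, ltB b (j a) /\ Q = ez (proj1_sig a)) /\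
       forall a, ltB b (j a) -> ez (proj1_sig a) = Q \/ elt Q (ez (proj1_sig a))).
    { destruct (pick_max (flip_lin Blin) HlB j b) as [No|[a [Ha M]]].
      - exists Rpt. split; auto. intros a Ha; destruct (No a Ha).
      - exists (ez (proj1_sig a)). split; eauto.
        intros a' Ha'. destruct (M a' Ha') as [E|E].
        + apply jinj in E. subst; auto.
        + right. apply ez_lt. apply jiff. auto. }
    destruct HPx as [P [HP1 HP2]]. destruct HQx as [Q [HQ1 HQ2]].
    assert (EP : extL F P).
    { destruct HP1 as [->|[a [_ ->]]]. left; auto. right. exists (proj1_sig a); split; auto.
      apply proj2_sig. }
    assert (EQ : extR F Q).
    { destruct HQ1 as [->|[a [_ ->]]]. left; auto. right. exists (proj1_sig a); split; auto.
      apply proj2_sig. }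
    assert (PQ : elt P Q).
    { destruct HP1 as [->|[a [Ha ->]]]; destruct HQ1 as [->|[a' [Ha' ->]]].
      - exists Top; apply topd_LR.
      - apply elt_L_real, ez_realish.
      - apply elt_real_R, ez_realish.
      - apply ez_lt. apply jiff. eauto. }
    destruct PQ as [c Hc].
    pose proof (HG P Q c EP EQ Hc) as Hwv.
    destruct (@lower_split P Q c v (extL_lish EP) (extR_rish EQ) Hc (lt_tle_lt Hvw Hwv))
      as [r [c1 [c2 [Rr [T1 [T2 [V1 V2]]]]]]].
    destruct (realish_ez Rr) as [x Ex]. subst r.
    assert (hspec : forall y, exists z, (y = b /\ z = x) \/ (exists a, j a = y /\ z = proj1_sig a)).
    { intros y. destruct (Hcov y) as [->|[a Ha]]. exists x; left; auto.
      exists (proj1_sig a); right; eauto. }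
    set (h := fun y => proj1_sig (constructive_indefinite_description _ (hspec y))).
    assert (hs : forall y, (y = b /\ h y = x) \/ (exists a, j a = y /\ h y = proj1_sig a)).
    { intros y. unfold h. exact (proj2_sig (constructive_indefinite_description _ (hspec y))). }
    assert (hb : h b = x).
    { destruct (hs b) as [[_ E]|[a [E _]]]; auto. destruct (Hb a E). }
    assert (hj : forall a, h (j a) = proj1_sig a).
    { intros a. destruct (hs (j a)) as [[E _]|[a' [E1 E2]]]. destruct (Hb a E).
      apply jinj in E1. subst a'. exact E2. }
    assert (K1 : forall a, ltB (j a) b -> ZL (proj1_sig a) x).
    { intros a Ha. apply ez_lt. destruct (HP2 a Ha) as [E|E].
      rewrite E. exists c1; auto. eapply elt_trans; eauto. exists c1; auto. }
    assert (K2 : forall a, ltB b (j a) -> ZL x (proj1_sig a)).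
    { intros a Ha. apply ez_lt. destruct (HQ2 a Ha) as [E|E].
      rewrite E. exists c2; auto. eapply elt_trans; [|eauto]. exists c2; auto. }
    assert (K1' : forall a, ltB (j a) b <-> ZL (proj1_sig a) x).
    { intros a. split; auto. intros Z1. destruct (Btri (j a) b) as [X|[X|X]]; auto.
      destruct (Hb a X). apply K2 in X. destruct (ZL_irr (ZL_trans Z1 X)). }
    assert (K2' : forall a, ltB b (j a) <-> ZL x (proj1_sig a)).
    { intros a. split; auto. intros Z1. destruct (Btri (j a) b) as [X|[X|X]]; auto.
      apply K1 in X. destruct (ZL_irr (ZL_trans Z1 X)). destruct (Hb a X). }
    assert (Hiff : forall y y', ltB y y' <-> ZL (h y) (h y')).
    { intros y y'. destruct (Hcov y) as [->|[a <-]]; destruct (Hcov y') as [->|[a' <-]].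
      - rewrite hb. split; intros X. destruct (Birr _ X). destruct (ZL_irr X).
      - rewrite hb, hj. auto.
      - rewrite hb, hj. auto.
      - rewrite !hj. symmetry. apply jiff. }
    exists (fun z => exists y, h y = z), h. split.
    + split; [|split; [|split; [|split]]].
      * intros z Hz. exists (j (exist _ z Hz)). rewrite hj. auto.
      * split; [eapply emb_inj; eauto|exact Hiff].
      * intros y. eauto.
      * auto.
      * exact hj.
    + apply IH; auto.
      assert (HC : forall z, (exists y, h y = z) -> z = x \/ F z).
      { intros z [y <-]. destruct (Hcov y) as [->|[a <-]]. left; auto.
        right. rewrite hj. apply proj2_sig. }
      assert (CL : forall P', extL (fun z => exists y, h y = z) P' -> extL F P' \/ P' = ez x).
      { intros P' [->|[z [Hz ->]]]. left; left; auto.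
        destruct (HC z Hz) as [->|Fz]. right; auto. left; right; eauto. }
      assert (CR : forall Q', extR (fun z => exists y, h y = z) Q' -> extR F Q' \/ Q' = ez x).
      { intros Q' [->|[z [Hz ->]]]. left; left; auto.
        destruct (HC z Hz) as [->|Fz]. right; auto. left; right; eauto. }
      intros P' Q' c' HP' HQ' Hc'.
      destruct (CL P' HP') as [OP| ->]; destruct (CR Q' HQ') as [OQ| ->].
      * left. eapply lt_tle_lt; eauto.
      *
        eapply tle_trans; [exact V1|]. eapply mono; [| |exact T1|exact Hc']; [|left; auto].
        destruct OP as [->|[z [Fz ->]]].
        -- destruct HP1 as [->|[a [_ ->]]]. left; auto. right. apply elt_L_real, ez_realish.
        -- assert (Zz : ZL z x) by (apply ez_lt; exists c'; auto).
           apply (K1' (exist _ z Fz)) in Zz. destruct (HP2 _ Zz) as [E|E]; [left|right]; auto.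
      *
        eapply tle_trans; [exact V2|]. eapply mono; [| |exact T2|exact Hc']; [left; auto|].
        destruct OQ as [->|[z [Fz ->]]].
        -- destruct HQ1 as [->|[a [_ ->]]]. left; auto. right. apply elt_real_R, ez_realish.
        -- assert (Zz : ZL x z) by (apply ez_lt; exists c'; auto).
           apply (K2' (exist _ z Fz)) in Zz. destruct (HQ2 _ Zz) as [E|E]; [left|right]; auto.
      * exfalso. destruct Hc' as [X _]. lia.
  - intros _ v Hv. apply IH; auto.
    intros P Q c HP HQ Hc. left. eapply lt_tle_lt; eauto.
Qed.

Definition finp (F : Zom_car T m -> Prop) : Prop := exists l, forall x, F x -> In x l.

Lemma fin_sig : forall (F : Zom_car T m -> Prop), finp F ->
  exists ls : list {a | F a}, forall s, In s ls.
Proof.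
  intros F [l Hl].
  assert (G : forall l, exists ls : list {a | F a}, forall s, In (proj1_sig s) l -> In s ls).
  { induction l0 as [|x l0 IH].
    - exists []. intros s [].
    - destruct IH as [ls Hls]. destruct (classic (F x)) as [Fx|nFx].
      + exists (exist _ x Fx :: ls). intros [y Fy] [E|H].
        * simpl in E. subst y. left. f_equal. apply proof_irrelevance.
        * right. apply Hls. auto.
      + exists ls. intros [y Fy] [E|H]. simpl in E. subst. contradiction. apply Hls; auto. }
  destruct (G l) as [ls Hls]. exists ls. intros s. apply Hls. apply Hl. apply proj2_sig.
Qed.

Definition Bad (w : tgt_car T) (F : Zom_car T m -> Prop) : Prop :=
  exists P Q c, extL F P /\ extR F Q /\ topd P Q c /\
    (forall x, F x -> ~ (elt P (ez x) /\ elt (ez x) Q)) /\ tgt_lt ltT (value P Q c) w.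

Definition ltB_up (F : Zom_car T m -> Prop) (P Q : Pt) (y y' : option {a | F a}) : Prop :=
  match y, y' with
  | Some a, Some a' => ZL (proj1_sig a) (proj1_sig a')
  | None, Some a' => elt P (ez (proj1_sig a'))
  | Some a, None => elt (ez (proj1_sig a)) Q
  | None, None => False
  end.

Lemma side : forall F P Q x, extL F P -> elt P Q -> F x ->
  elt P (ez x) \/ elt (ez x) Q.
Proof.
  intros F P Q x [->|[p [Fp ->]]] PQ Fx.
  - left. apply elt_L_real, ez_realish.
  - destruct (ez_total p x) as [<-|[X|X]]; auto.
    + left; apply ez_lt; auto.
    + right. eapply elt_trans; eauto. apply ez_lt; auto.
Qed.

Lemma ltB_lin : forall F P Q, extL F P -> elt P Q ->
  (forall x, F x -> ~ (elt P (ez x) /\ elt (ez x) Q)) ->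
  is_strict_linorder (@ltB_up F P Q).
Proof.
  intros F P Q EP PQ Gap. split; [|split].
  - intros [a|]; simpl; auto. apply ZL_irr.
  - intros [a|] [a'|] [a''|]; simpl; intros H1 H2; try contradiction.
    + eapply ZL_trans; eauto.
    + apply ez_lt in H1. eapply elt_trans; eauto.
    + destruct (ez_total (proj1_sig a) (proj1_sig a'')) as [E|[X|X]]; auto.
      * exfalso. apply (Gap (proj1_sig a)). apply proj2_sig. split; auto. rewrite E; auto.
      * exfalso. apply (Gap (proj1_sig a)). apply proj2_sig. split; auto.
        eapply elt_trans; eauto. apply ez_lt; auto.
    + apply ez_lt in H2. eapply elt_trans; eauto.
    + exfalso. apply (Gap (proj1_sig a')). apply proj2_sig. split; auto.
  - intros [a|] [a'|]; simpl.
    + destruct (ez_total (proj1_sig a) (proj1_sig a')) as [E|[X|X]]; auto.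
      right; left. destruct a, a'; simpl in E; subst. f_equal. f_equal. apply proof_irrelevance.
    + destruct (side EP PQ (proj2_sig a)); auto.
    + destruct (side EP PQ (proj2_sig a')); auto.
    + auto.
Qed.

Lemma upper : forall w F, finp F -> Bad w F -> ~ rk_ge ZL (tgt_lt ltT) w F.
Proof.
  intros w. induction w as [w IH] using (well_founded_ind tgt_wf).
  intros F Hfin [P [Q [c [EP [EQ [Hc [Gap Hlt]]]]]]] Hrk.
  destruct Hrk as [w F H1 H2].
  assert (PQ : elt P Q) by (exists c; auto).
  destruct (classic (exists v, immediate_pred (tgt_lt ltT) v w)) as [[v Hv]|Nv].
  - pose proof Hv as [Hvw Hvi].
    assert (Hle : tle (value P Q c) v).
    { destruct (tgt_tri (value P Q c) v) as [E|[X|X]]; [right|left|]; auto.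
      exfalso. apply Hvi. eauto. }
    destruct (fin_sig Hfin) as [ls Hls].
    assert (Hpe : prime_extension ZL F (@ltB_up F P Q) Some).
    { split; [apply ltB_lin; auto|split; [|split]].
      - exists (None :: map Some ls). intros [a|]; [right; apply in_map; auto|left; auto].
      - split. intros x y E; injection E; auto. intros x y; simpl; tauto.
      - exists None. split. intros a; discriminate.
        intros [a|]; [right; eauto|left; auto]. }
    destruct (H1 v Hv _ _ _ Hpe) as [C [h [[HFC [[hinj hiff] [HC1 [HC2 Hfix]]]] Hrk']]].
    set (r := h None).
    assert (Pr : elt P (ez r)).
    { destruct EP as [->|[p [Fp ->]]]. apply elt_L_real, ez_realish.
      apply ez_lt. pose proof (Hfix (exist _ p Fp)) as E. simpl in E. unfold r. rewrite <- E. apply hiff. simpl. auto. }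
    assert (rQ : elt (ez r) Q).
    { destruct EQ as [->|[p [Fp ->]]]. apply elt_real_R, ez_realish.
      apply ez_lt. pose proof (Hfix (exist _ p Fp)) as E. simpl in E. unfold r. rewrite <- E. apply hiff. simpl. auto. }
    assert (HC : forall z, C z -> z = r \/ F z).
    { intros z Hz. destruct (HC2 z Hz) as [[a|] <-]. right. rewrite Hfix. apply proj2_sig.
      left; auto. }
    assert (finC : finp C).
    { exists (map h (None :: map Some ls)). intros z Hz. destruct (HC2 z Hz) as [y <-].
      apply in_map. destruct y as [a|]; [right; apply in_map; auto|left; auto]. }
    assert (Cr : C r) by apply HC1.
    destruct Pr as [c1 T1]. destruct rQ as [c2 T2].
    destruct (split_down Hc T1 T2) as [L1|L2].
    + apply (IH v Hvw C finC); auto.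
      exists P, (ez r), c1. split; [|split; [|split; [|split]]].
      * destruct EP as [->|[p [Fp ->]]]. left; auto. right; eauto.
      * right; eauto.
      * auto.
      * intros z Cz [X1 X2]. destruct (HC z Cz) as [->|Fz]. apply (elt_irr X2).
        apply (Gap z Fz). split; auto. apply elt_trans with (ez r); auto. exists c2; auto.
      * eapply lt_tle_lt; eauto.
    + apply (IH v Hvw C finC); auto.
      exists (ez r), Q, c2. split; [|split; [|split; [|split]]].
      * right; eauto.
      * destruct EQ as [->|[p [Fp ->]]]. left; auto. right; eauto.
      * auto.
      * intros z Cz [X1 X2]. destruct (HC z Cz) as [->|Fz]. apply (elt_irr X1).
        apply (Gap z Fz). split; auto. apply elt_trans with (ez r); auto. exists c1; auto.
      * eapply lt_tle_lt; eauto.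
  - assert (Hlim : is_limit (tgt_lt ltT) w) by (split; eauto).
    assert (Ex : exists u, tgt_lt ltT (value P Q c) u /\ tgt_lt ltT u w).
    { apply NNPP. intros No. apply Nv. exists (value P Q c). split; auto. }
    destruct Ex as [u [U1 U2]].
    apply (IH u U2 F Hfin); [|apply H2; auto].
    exists P, Q, c. split; [|split; [|split; [|split]]]; auto.
Qed.

End Ord.

Lemma exists_min : forall (T : Type) (ltT : T -> T -> Prop), well_founded ltT ->
  forall t : T, exists t0, forall s, ~ ltT s t0.
Proof.
  intros T ltT Hwf t. induction t as [t IH] using (well_founded_ind Hwf).
  destruct (classic (exists s, ltT s t)) as [[s Hs]|No].
  - exact (IH s Hs).
  - exists t. intros s Hs. apply No; eauto.
Qed.

Theorem theorem6p19 (T : Type) (ltT : T -> T -> Prop)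
  (Hlin : is_strict_linorder ltT) (Hwf : well_founded ltT)
  (Hcount : exists e : T -> nat, forall x y, e x = e y -> x = y)
  (Hne : inhabited T)
  (m : nat) (Hm : 1 <= m) :
  rank_is (@Zom_lt T ltT m) (tgt_lt ltT) (inr (Nat.log2 m))
    (fun _ : Zom_car T m => False).
Proof.
  destruct Hne as [t].
  destruct (exists_min Hwf t) as [t0 Ht0].
  split.
  - apply (@lower T ltT Hlin Hwf m t0 Hm Ht0).
    intros P Q c [->|[x [[] _]]] [->|[y [[] _]]] Hc.
    assert (c = Top T) by (eapply topd_uniq; eauto; apply topd_LR; auto). subst c.
    rewrite value_LR. right; auto.
  - intros w' Hw'. apply (@upper T ltT Hlin Hwf m t0 Hm).
    + exists []. intros x [].
    + exists (Lpt t0), (@Rpt T m), (Top T). split; [left; auto|split; [left; auto|split]].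
      apply topd_LR; auto. split. intros x [].
      rewrite value_LR. auto.
Qed.
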